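(* Let $\rho_r\in(0,1)$, $\rho_w\in(0,1/2)$, and let $C_n\subseteq\{0,1\}^n$ be a (stochastic) code of rate $R$ that, over the $(\rho_r,\rho_w)$ adversarial wiretap channel, has decoding error at most $\delta_n$ against every adversary strategy and normalized equivocation $\eta_n=\Delta(C_n)/n$. Then for every sufficiently small $\xi>0$, over the $(\rho_r-\xi,\rho_w-\xi)$ random wiretap channel the code $C_n$ has decoding error at most $\delta_n+\exp(-\Omega(n))$ and normalized equivocation $H(\mathbf S\mid\mathbf Z)/n\ge \eta_n\bigl(1-\exp(-\Omega(n))\bigr)$, where the implied constants depend on $\rho_r,\rho_w,\xi$.
   Context: The $(\rho_r,\rho_w)$ adversarial wiretap channel: the transmitted codeword $x\in\{0,1\}^n$ encodes message $\mathbf S$; the adversary picks $\mathscr S\subseteq[n]$, $|\mathscr S|=\rho_r n$, sees $\mathbf V(\mathscr S)\in\{0,1,?\}^n$ (equal to $x_i$ on $\mathscr S$ and $?$ elsewhere), and adds an error of Hamming weight at most $\rho_w n$ whose distribution depends only on the code and the view; the receiver uses nearest-neighbor decoding. Decoding error is $\Pr[\hat{\mathbf S}\ne\mathbf S]$. With $\mathbf S$ uniform, the equivocation is $\Delta(C_n)=\min_{|\mathscr S|=\rho_r n}H(\mathbf S\mid\mathbf V(\mathscr S))$. The $(a,b)$ random wiretap channel sends $x$ through a binary erasure channel $\mathrm{BEC}(1-a)$ (each coordinate independently erased with probability $1-a$) to the eavesdropper, producing $\mathbf Z\in\{0,1,?\}^n$, and through a binary symmetric channel $\mathrm{BSC}(b)$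 to the receiver; its normalized equivocation is $H(\mathbf S\mid\mathbf Z)/n$ with $\mathbf S$ uniform. *)

(* Defs.v *)
From mathcomp Require Import all_boot.
From Stdlib Require Import Reals.
Set Implicit Arguments. Unset Strict Implicit. Unset Printing Implicit Defensive.

Local Open Scope R_scope.

Notation "\sumR_ ( i : T ) F" := (\big[Rplus/R0]_(i : T) F)
  (at level 41, F at level 41, i, T at level 50).

(* Binary words of length n, and eavesdropper views (None = erasure '?'). *)
Definition word (n : nat) := {ffun 'I_n -> bool}.
Definition view (n : nat) := {ffun 'I_n -> option bool}.

Definition xorw n (x e : word n) : word n := [ffun i => x i (+) e i].
Definition wt n (e : word n) : nat := #|[set i | e i]|.
Definition hdist n (x y : word n) : nat := #|[set i | x i != y i]|.

Definition viewof n (S : {set 'I_n}) (x : word n) : view n :=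
  [ffun i => if i \in S then Some (x i) else None].

Definition log2 (x : R) : R := ln x / ln 2.

Definition condH (A B : finType) (P : A -> B -> R) : R :=
  \sumR_(a : A) \sumR_(b : B)
    (if Rlt_dec 0 (P a b)
     then - (P a b) * log2 (P a b / (\sumR_(a' : A) P a' b))
     else 0).

(* A stochastic code: encoder enc s x = Pr[X = x | S = s]. *)
Definition valid_enc n (M : finType) (enc : M -> word n -> R) : Prop :=
  (forall s x, 0 <= enc s x) /\ (forall s, \sumR_(x : word n) enc s x = 1).

(* Nearest-neighbour decoding: dec y is the message of a codeword closest to y
   among all codewords (words with positive probability under some message). *)
Definition nn_decoder n (M : finType) (enc : M -> word n -> R) (dec : word n -> M)
  : Prop :=
  forall y : word n, exists x : word n,
    0 < enc (dec y) x /\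
    forall (s' : M) (x' : word n), 0 < enc s' x' -> (hdist x y <= hdist x' y)%nat.

Definition valid_adv n (rho_w : R) (adv : view n -> word n -> R) : Prop :=
  (forall v e, 0 <= adv v e) /\
  (forall v, \sumR_(e : word n) adv v e = 1) /\
  (forall v e, 0 < adv v e -> INR (wt e) <= rho_w * INR n).

Definition uniformP (M : finType) : R := / INR #|M|.

Definition err_ind (M : finType) (s shat : M) : R := if shat == s then 0 else 1.

Definition adv_err n (M : finType) (enc : M -> word n -> R) (dec : word n -> M)
  (S : {set 'I_n}) (adv : view n -> word n -> R) : R :=
  \sumR_(s : M) (uniformP M * \sumR_(x : word n) (enc s x *
     \sumR_(e : word n) (adv (viewof S x) e * err_ind s (dec (xorw x e))))).

Definition joint_adv n (M : finType) (enc : M -> word n -> R) (S : {set 'I_n})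
  (s : M) (v : view n) : R :=
  \sumR_(x : word n) (uniformP M * enc s x * (if viewof S x == v then 1 else 0)).

Definition bsc n (b : R) (e : word n) : R :=
  \big[Rmult/R1]_(i < n) (if e i then b else 1 - b).

(* BEC(1-a): each coordinate kept with prob a, erased with prob 1-a. *)
Definition bec n (a : R) (x : word n) (z : view n) : R :=
  \big[Rmult/R1]_(i < n)
    (match z i with None => 1 - a | Some c => if c == x i then a else 0 end).

Definition rnd_err n (M : finType) (enc : M -> word n -> R) (dec : word n -> M)
  (b : R) : R :=
  \sumR_(s : M) (uniformP M * \sumR_(x : word n) (enc s x *
     \sumR_(e : word n) (bsc b e * err_ind s (dec (xorw x e))))).

Definition joint_rnd n (M : finType) (enc : M -> word n -> R) (a : R)
  (s : M) (z : view n) : R :=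
  \sumR_(x : word n) (uniformP M * enc s x * bec a x z).

(* |S| = rho_r n, read as floor(rho_r n). *)
Definition nfloor (r : R) : nat := Z.to_nat (Int_part r).

(* Main.v *)
Require Import Defs.
From HB Require Import structures.
From mathcomp Require Import all_boot.
From Stdlib Require Import Reals Lra Lia ZArith.
Local Open Scope R_scope.

Lemma Rplus_assoc' : associative Rplus. Proof. by move=>*; rewrite Rplus_assoc. Qed.
Lemma Rmult_assoc' : associative Rmult. Proof. by move=>*; rewrite Rmult_assoc. Qed.
HB.instance Definition _ := Monoid.isComLaw.Build R R0 Rplus Rplus_assoc' Rplus_comm Rplus_0_l.
HB.instance Definition _ := Monoid.isComLaw.Build R R1 Rmult Rmult_assoc' Rmult_comm Rmult_1_l.
HB.instance Definition _ := Monoid.isMulLaw.Build R R0 Rmult Rmult_0_l Rmult_0_r.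
HB.instance Definition _ := Monoid.isAddLaw.Build R Rmult Rplus Rmult_plus_distr_r Rmult_plus_distr_l.

Lemma sumR_ge0 (I : Type) (r : seq I) (P : pred I) (F : I -> R) :
  (forall i, P i -> 0 <= F i) -> 0 <= \big[Rplus/R0]_(i <- r | P i) F i.
Proof. move=> H; apply: (big_ind (fun x => 0 <= x)) => //; [lra| move=>*; lra]. Qed.

Lemma sumR_le (I : Type) (r : seq I) (P : pred I) (F G : I -> R) :
  (forall i, P i -> F i <= G i) ->
  \big[Rplus/R0]_(i <- r | P i) F i <= \big[Rplus/R0]_(i <- r | P i) G i.
Proof. move=> H; apply: (big_ind2 (fun x y => x <= y)) => //; [lra| move=>*; lra]. Qed.

Lemma prodR_ge0 (I : Type) (r : seq I) (P : pred I) (F : I -> R) :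
  (forall i, P i -> 0 <= F i) -> 0 <= \big[Rmult/R1]_(i <- r | P i) F i.
Proof. move=> H; apply: (big_ind (fun x => 0 <= x)) => //; [lra| move=>*; nra]. Qed.

Lemma prodR_gt0 (I : Type) (r : seq I) (P : pred I) (F : I -> R) :
  (forall i, P i -> 0 < F i) -> 0 < \big[Rmult/R1]_(i <- r | P i) F i.
Proof. move=> H; apply: (big_ind (fun x => 0 < x)) => //; [lra| move=>*; nra]. Qed.

Lemma exp_le_mono x y : x <= y -> exp x <= exp y.
Proof. case=> h; [left; exact: exp_increasing | rewrite h; lra]. Qed.

Lemma exp_INR_mul t k : exp (t * INR k) = exp t ^ k.
Proof.
elim: k => [|k IH]; first by rewrite /= Rmult_0_r exp_0.
rewrite S_INR Rmult_plus_distr_l Rmult_1_r exp_plus IH /=; lra.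
Qed.

Lemma ln_le_sub1 y : 0 < y -> ln y <= y - 1.
Proof. move=> hy; have := exp_ineq1_le (ln y); rewrite exp_ln //; lra. Qed.

Lemma sum_word_prod n (u v : 'I_n -> R) :
  \big[Rplus/R0]_(e : word n) \big[Rmult/R1]_(i < n) (if e i then u i else v i)
  = \big[Rmult/R1]_(i < n) (u i + v i).
Proof.
rewrite /word -(bigA_distr_bigA (fun i (b : bool) => if b then u i else v i)).
by apply: eq_bigr => i _; rewrite big_bool.
Qed.

Lemma prod_if_pow n (e : word n) (y : R) :
  \big[Rmult/R1]_(i < n) (if e i then y else 1) = y ^ wt e.
Proof.
rewrite -big_mkcond /= /wt.
rewrite (eq_bigl (fun i => i \in [set i | e i])); last by move=> i; rewrite inE.
rewrite big_const; elim: #|_| => [|k IH] //=; by rewrite IH.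
Qed.

Lemma bsc_ge0 n b (e : word n) : 0 <= b <= 1 -> 0 <= bsc b e.
Proof. move=> hb; apply: prodR_ge0 => i _; case: (e i); lra. Qed.

Lemma bsc_gt0 n b (e : word n) : 0 < b < 1 -> 0 < bsc b e.
Proof. move=> hb; apply: prodR_gt0 => i _; case: (e i); lra. Qed.

Lemma bsc_sum1 n b : \big[Rplus/R0]_(e : word n) bsc b e = 1.
Proof.
rewrite /bsc sum_word_prod; apply: (big_ind (fun x => x = 1)) => //.
- by move=> x y -> ->; lra.
- move=> i _; lra.
Qed.

Definition cst (xi : R) := xi * xi / (2 * (2 + xi)).

Lemma cst_pos xi : 0 < xi -> 0 < cst xi.
Proof. move=> h; rewrite /cst; apply: Rdiv_lt_0_compat; nra. Qed.

Lemma prod_const_pow n (y : R) : \big[Rmult/R1]_(i < n) y = y ^ n.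
Proof. rewrite big_const_ord; elim: n => [|k IH] //=; by rewrite IH. Qed.

Lemma chernoff b xi n : 0 <= b <= 1 -> 0 < xi ->
  \big[Rplus/R0]_(e : word n)
     (if Rlt_dec ((b+xi)*INR n) (INR (wt e)) then bsc b e else 0)
  <= exp (- (cst xi * INR n)).
Proof.
move=> hb hxi.
set t := xi / (2 + xi).
have ht : t * (2 + xi) = xi by rewrite /t; field; lra.
have ht0 : 0 < t by rewrite /t; apply: Rdiv_lt_0_compat; lra.
have ht1 : t < 1 by nra.
have step1 : \big[Rplus/R0]_(e : word n)
     (if Rlt_dec ((b+xi)*INR n) (INR (wt e)) then bsc b e else 0)
   <= \big[Rplus/R0]_(e : word n)
     (exp (- (t * ((b + xi) * INR n))) * (bsc b e * exp t ^ wt e)).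
  apply: sumR_le => e _.
  have hbs := bsc_ge0 n b e hb.
  rewrite -exp_INR_mul -Rmult_assoc (Rmult_comm _ (bsc b e)) Rmult_assoc -exp_plus.
  case: Rlt_dec => h.
  - have : 1 <= exp (- (t * ((b + xi) * INR n)) + t * INR (wt e)).
      rewrite -exp_0; apply: exp_le_mono.
      have := Rmult_le_pos t (INR (wt e) - (b + xi) * INR n) (Rlt_le _ _ ht0) ltac:(lra); lra.
    move=> h1 /=; nra.
  - simpl; have := exp_pos (- (t * ((b + xi) * INR n)) + t * INR (wt e)); nra.
apply: (Rle_trans _ _ _ step1).
rewrite -big_distrr /=.
have step2 : \big[Rplus/R0]_(e : word n) (bsc b e * exp t ^ wt e)
            = (b * exp t + (1 - b)) ^ n.
  rewrite -prod_const_pow -sum_word_prod; apply: eq_bigr => e _.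
  rewrite -prod_if_pow /bsc -big_split /=; apply: eq_bigr => i _.
  by case: (e i); lra.
rewrite step2.
have hexp : b * exp t + (1 - b) <= exp (b * (exp t - 1)).
  have := exp_ineq1_le (b * (exp t - 1)); lra.
have hpos : 0 <= b * exp t + (1 - b) by have := exp_pos t; nra.
have := pow_incr _ _ n (conj hpos hexp).
rewrite -exp_INR_mul => hpow.
apply: (Rle_trans _ (exp (- (t * ((b + xi) * INR n))) * exp (b * (exp t - 1) * INR n))).
  apply: Rmult_le_compat_l => //; exact: Rlt_le (exp_pos _).
rewrite -exp_plus; apply: exp_le_mono.
have het : exp t <= (2 + xi) / 2.
  have h1 := exp_ineq1_le (- t).
  have h2 : exp t * exp (- t) = 1 by rewrite -exp_plus Rplus_opp_r exp_0.
  have h3 : 1 + - t = 2 / (2 + xi) by rewrite /t; field; lra.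
  have h4 : exp (-t) * ((2 + xi)/2) >= 1.
    rewrite h3 in h1. have : 2 / (2 + xi) * ((2 + xi) / 2) = 1 by field; lra. nra.
  have := exp_pos t; have := exp_pos (-t); nra.
have hn := pos_INR n.
have hc : cst xi * (2 * (2 + xi)) = xi * xi by rewrite /cst; field; lra.
have key : b * (exp t - 1) - t * (b + xi) <= - cst xi.
  have : (b * (exp t - 1) - t * (b + xi)) * (2 * (2 + xi)) <= - cst xi * (2 * (2+xi)).
    have hh : exp t - 1 <= xi / 2 by lra.
    have hh2 : b * (exp t - 1) <= b * (xi / 2) by apply: Rmult_le_compat_l; lra.
    have : b * (exp t - 1) * (2 * (2+xi)) <= b * (xi / 2) * (2 * (2 + xi)).
      apply: Rmult_le_compat_r => //; lra.
    nra.
  nra.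
nra.
Qed.

Definition tterm (p q : R) : R := if Rlt_dec 0 p then - p * log2 (p / q) else 0.

Lemma condH_tterm (A B : finType) (P : A -> B -> R) :
  condH P = \big[Rplus/R0]_(a : A) \big[Rplus/R0]_(b : B) tterm (P a b) (\big[Rplus/R0]_(a' : A) P a' b).
Proof. by []. Qed.

Lemma ln2_pos : 0 < ln 2.
Proof. have := ln_lt_2; lra. Qed.

Lemma tterm_ge0 p q : 0 <= p <= q -> 0 <= tterm p q.
Proof.
move=> hpq; rewrite /tterm /log2; case: Rlt_dec => hp /=; last by apply: Rle_refl.
have hq : 0 < q by lra.
have h1 : p / q <= 1.
  have -> : p / q = 1 - (q - p) / q by field; lra.
  have : 0 <= (q - p) / q by apply: Rmult_le_pos; [lra | apply: Rlt_le; apply: Rinv_0_lt_compat].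
  lra.
have : ln (p / q) <= 0.
  have := ln_le_sub1 (p / q) ltac:(apply: Rdiv_lt_0_compat; lra); lra.
move=> hl; have l2 := ln2_pos.
have : ln (p / q) / ln 2 <= 0.
  rewrite /Rdiv; have := Rinv_0_lt_compat _ l2; nra.
move: (ln (p / q) / ln 2) => x hx.
have : 0 <= p * - x by apply: Rmult_le_pos; lra.
have -> : - p * x = p * - x by ring.
lra.
Qed.

Lemma sum_zero_each (I : finType) (P : pred I) (F : I -> R) :
  (forall i, P i -> 0 <= F i) -> \big[Rplus/R0]_(i | P i) F i = 0 ->
  forall i, P i -> F i = 0.
Proof.
move=> H Hs i Pi; move: Hs; rewrite (bigD1 i) //=.
have := sumR_ge0 _ (index_enum I) (fun j => P j && (j != i)) F (fun j hj => H j (andP hj).1).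
have := H i Pi; lra.
Qed.

Lemma logsum (I : finType) (P : pred I) (p q : I -> R) :
  (forall i, P i -> 0 <= p i <= q i) ->
  \big[Rplus/R0]_(i | P i) tterm (p i) (q i) <=
  tterm (\big[Rplus/R0]_(i | P i) p i) (\big[Rplus/R0]_(i | P i) q i).
Proof.
move=> H.
set ps := \big[Rplus/R0]_(i | P i) p i; set qs := \big[Rplus/R0]_(i | P i) q i.
have ps0 : 0 <= ps by apply: sumR_ge0 => i /H; lra.
have psqs : ps <= qs by apply: sumR_le => i /H; lra.
have l2 := ln2_pos.
case: (Rle_lt_or_eq_dec 0 ps ps0) => hps; last first.
  rewrite {2}/tterm; case: Rlt_dec => h /=; first lra.
  rewrite big1; first by apply: Rle_refl.
  move=> i Pi.
  have -> : p i = 0 by apply: (sum_zero_each I P p) => // j /H; lra.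
  by rewrite /tterm; case: Rlt_dec => //= ?; lra.
have hqs : 0 < qs by lra.
set A := - (ln (ps / qs) / ln 2) - / ln 2.
set B := ps / qs / ln 2.
have hpt : forall i, P i -> tterm (p i) (q i) <= p i * A + q i * B.
  move=> i /H hi; rewrite /tterm /log2 /A /B; case: Rlt_dec => hp /=.
  - have hq : 0 < q i by lra.
    have hy : 0 < q i / p i * (ps / qs).
      apply: Rmult_lt_0_compat; apply: Rdiv_lt_0_compat; lra.
    have := ln_le_sub1 _ hy.
    rewrite ln_mult; [|apply: Rdiv_lt_0_compat; lra|apply: Rdiv_lt_0_compat; lra].
    have -> : q i / p i = / (p i / q i) by field; lra.
    rewrite ln_Rinv; last by apply: Rdiv_lt_0_compat; lra.
    move=> hl.
    have e1 : q i / p i * (ps / qs) * p i = q i * (ps / qs) by field; lra.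
    have : p i * (- ln (p i / q i) + ln (ps / qs)) <= p i * (/ (p i / q i) * (ps / qs) - 1).
      by apply: Rmult_le_compat_l; lra.
    have -> : / (p i / q i) = q i / p i by field; lra.
    move=> hh; have e2 : p i * (q i / p i * (ps / qs) - 1) = q i * (ps / qs) - p i by field; lra.
    rewrite e2 in hh.
    have il2 := Rinv_0_lt_compat _ l2.
    have : (p i * (- ln (p i / q i) + ln (ps / qs))) * / ln 2 <= (q i * (ps / qs) - p i) * / ln 2.
      by apply: Rmult_le_compat_r; lra.
    rewrite /Rdiv; nra.
  - have : 0 <= q i * (ps / qs / ln 2).
      apply: Rmult_le_pos; first lra.
      apply: Rlt_le; apply: Rdiv_lt_0_compat => //; apply: Rdiv_lt_0_compat; lra.
    have -> : p i = 0 by lra.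
    lra.
apply: (Rle_trans _ _ _ (sumR_le _ _ _ _ _ hpt)).
rewrite big_split /= -!big_distrl /= -/ps -/qs.
rewrite /tterm; case: Rlt_dec => // _ /=.
rewrite /A /B /log2.
have : qs * (ps / qs / ln 2) = ps / ln 2 by field; lra.
move=> ->; rewrite /Rdiv; lra.
Qed.

Lemma term_le_sum (A : finType) (F : A -> R) a :
  (forall a, 0 <= F a) -> F a <= \big[Rplus/R0]_(a' : A) F a'.
Proof.
move=> H; rewrite (bigD1 a) //=.
have := sumR_ge0 _ (index_enum A) (fun j => j != a) F (fun j _ => H j); lra.
Qed.

Lemma condH_coarsen (A B B' : finType) (P : A -> B' -> R) (f : B' -> B) :
  (forall a b, 0 <= P a b) ->
  condH P <= condH (fun a b => \big[Rplus/R0]_(b' | f b' == b) P a b').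
Proof.
move=> H; rewrite !condH_tterm; apply: sumR_le => a _.
rewrite (partition_big f xpredT) //=; apply: sumR_le => b _.
have -> : \big[Rplus/R0]_(a' : A) \big[Rplus/R0]_(b' | f b' == b) P a' b'
   = \big[Rplus/R0]_(b' | f b' == b) \big[Rplus/R0]_(a' : A) P a' b'.
  by rewrite (exchange_big_dep (fun j => f j == b)) //=; apply: eq_bigr => j hj; apply: eq_bigl => i; rewrite hj.
apply: logsum => b' _; split; first exact: H.
exact: (term_le_sum A (fun a' => P a' b') a (fun a' => H a' b')).
Qed.

Lemma condH_ge0 (A B : finType) (P : A -> B -> R) :
  (forall a b, 0 <= P a b) -> 0 <= condH P.
Proof.
move=> H; rewrite condH_tterm; apply: sumR_ge0 => a _; apply: sumR_ge0 => b _.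
apply: tterm_ge0; split; first exact: H.
exact: (term_le_sum A (fun a' => P a' b) a (fun a' => H a' b)).
Qed.

From mathcomp Require Import zify.
Set Implicit Arguments. Unset Strict Implicit.

Lemma condH_ext (A B : finType) (P Q : A -> B -> R) :
  (forall a b, P a b = Q a b) -> condH P = condH Q.
Proof.
move=> H; rewrite !condH_tterm; apply: eq_bigr => a _; apply: eq_bigr => b _.
rewrite H; congr tterm; apply: eq_bigr => a' _; exact: H.
Qed.

Definition rf n (T : {set 'I_n}) (v : view n) : view n :=
  [ffun i => if i \in T then v i else None].

Lemma rf_viewof n (T T' : {set 'I_n}) (x : word n) :
  T \subset T' -> rf T (viewof T' x) = viewof T x.
Proof.
move=> sub; apply/ffunP => i; rewrite !ffunE.
case hi: (i \in T) => //; by rewrite (subsetP sub i hi).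
Qed.

Lemma sum_ind_eq (B : finType) (g : B -> B) (v w : B) :
  \big[Rplus/R0]_(v' | g v' == v) (if w == v' then 1 else 0) = if g w == v then 1 else 0.
Proof.
case: eqP => h.
- rewrite (bigD1 w); last by apply/eqP.
  rewrite eqxx big1 /=; first by rewrite Rplus_0_r.
  move=> v' /andP [_ hv']; by rewrite eq_sym (negbTE hv').
- apply: big1 => v' /eqP hv'; case: eqP => // hw; subst; by case: h.
Qed.

Lemma joint_adv_restrict n (M : finType) (enc : M -> word n -> R) (T T' : {set 'I_n}) :
  T \subset T' -> forall s v,
  joint_adv enc T s v = \big[Rplus/R0]_(v' | rf T v' == v) joint_adv enc T' s v'.
Proof.
move=> sub s v; rewrite /joint_adv exchange_big /=; apply: eq_bigr => x _.
rewrite -big_distrr /= sum_ind_eq rf_viewof //.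
Qed.

Lemma condH_mono n (M : finType) (enc : M -> word n -> R) (T T' : {set 'I_n}) :
  (forall s x, 0 <= enc s x) -> T \subset T' ->
  condH (joint_adv enc T') <= condH (joint_adv enc T).
Proof.
move=> H sub; rewrite (condH_ext (joint_adv_restrict enc sub)).
apply: condH_coarsen => s v; rewrite /joint_adv; apply: sumR_ge0 => x _.
have hu : 0 <= uniformP M.
  rewrite /uniformP; case: (Nat.eq_dec #|M| 0) => h; first by rewrite h /= Rinv_0; lra.
  apply: Rlt_le; apply: Rinv_0_lt_compat; apply: lt_0_INR; lia.
have := H s x; case: eqP => _; nra.
Qed.

Lemma superset n (k : nat) (T : {set 'I_n}) :
  (#|T| <= k)%nat -> (k <= n)%nat -> exists T' : {set 'I_n}, T \subset T' /\ #|T'| = k.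
Proof.
elim: k T => [|k IH] T hT hk.
  by exists T; split; [exact: subxx | apply/eqP; rewrite -leqn0].
case: (eqVneq #|T| k.+1) => hTk; first by exists T.
have hT' : (#|T| <= k)%nat by move: hT hTk; rewrite leq_eqVlt => /orP [/eqP -> | ] /=; [rewrite eqxx | ].
have [T2 [s2 c2]] := IH T hT' (ltnW hk).
have : (0 < #|~: T2|)%nat.
  have := cardsC T2; rewrite card_ord c2 => h; lia.
case/card_gt0P => i; rewrite inE => hi.
exists (i |: T2); split; first by apply: (subset_trans s2); apply: subsetUr.
by rewrite cardsU1 hi c2.
Qed.

Lemma nfloor_spec r : 0 <= r -> INR (nfloor r) <= r < INR (nfloor r) + 1.
Proof.
move=> hr; have [h1 h2] := base_Int_part r.
have hz : (0 <= Int_part r)%Z.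
  have : -1 < IZR (Int_part r) by lra.
  move=> h; have : (-1 < Int_part r)%Z by apply: lt_IZR.
  lia.
rewrite /nfloor INR_IZR_INZ Z2Nat.id //; lra.
Qed.


Definition pat n (z : view n) : word n := [ffun i => z i != None].
Definition Tp n (e : word n) : {set 'I_n} := [set i | e i].

Lemma pat_viewof n (e x : word n) : pat (viewof (Tp e) x) = e.
Proof. apply/ffunP => i; rewrite !ffunE inE; by case: (e i). Qed.


Lemma ind_prod_ffun (A : finType) n (f g : {ffun 'I_n -> A}) :
  (if f == g then 1 else 0) = \big[Rmult/R1]_(i < n) (if f i == g i then 1 else 0).
Proof.
case: eqP => [-> | hne].
  by rewrite big1 // => i _; rewrite eqxx.
case: (pickP (fun i => f i != g i)) => [i hi | hall].
  rewrite (bigD1 i) //= (negbTE hi) Rmult_0_l //.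
exfalso; apply: hne; apply/ffunP => i; have := hall i; by move/negbFE/eqP.
Qed.

Lemma bec_fact n a (x : word n) (z : view n) :
  bec a x z = bsc a (pat z) * (if viewof (Tp (pat z)) x == z then 1 else 0).
Proof.
rewrite ind_prod_ffun /bec /bsc -big_split /=; apply: eq_bigr => i _.
rewrite !ffunE inE !ffunE.
case: (z i) => [c|] /=; last lra.
case: (x i); case: c => /=; lra.
Qed.

Lemma uniform_ge0 (M : finType) : 0 <= uniformP M.
Proof.
rewrite /uniformP; case: (Nat.eq_dec #|M| 0) => h; first by rewrite h /= Rinv_0; lra.
apply: Rlt_le; apply: Rinv_0_lt_compat; apply: lt_0_INR; lia.
Qed.

Lemma joint_rnd_fact n (M : finType) (enc : M -> word n -> R) a s z :
  joint_rnd enc a s z = bsc a (pat z) * joint_adv enc (Tp (pat z)) s z.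
Proof.
rewrite /joint_rnd /joint_adv big_distrr /=; apply: eq_bigr => x _.
rewrite bec_fact; ring.
Qed.

Lemma joint_adv_off n (M : finType) (enc : M -> word n -> R) (e : word n) s z :
  pat z != e -> joint_adv enc (Tp e) s z = 0.
Proof.
move=> hne; rewrite /joint_adv big1 // => x _.
case: eqP => h; last ring.
by move: hne; rewrite -h pat_viewof eqxx.
Qed.

Lemma tterm_scale w p q : 0 < w -> tterm (w * p) (w * q) = w * tterm p q.
Proof.
move=> hw; rewrite /tterm.
case: Rlt_dec => h1; case: Rlt_dec => h2 /=.
- have -> : w * p / (w * q) = p / q.
    rewrite /Rdiv Rinv_mult.
    have -> : w * p * (/ w * / q) = (w * / w) * (p * / q) by ring.
    rewrite Rinv_r; [ring | lra].
  ring.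
- exfalso; nra.
- exfalso; nra.
- ring.
Qed.

Lemma decomp n (M : finType) (enc : M -> word n -> R) a :
  0 < a < 1 ->
  condH (joint_rnd enc a) =
  \big[Rplus/R0]_(e : word n) (bsc a e * condH (joint_adv enc (Tp e))).
Proof.
move=> ha.
rewrite condH_tterm.
have step1 : forall s z,
  tterm (joint_rnd enc a s z) (\big[Rplus/R0]_(s' : M) joint_rnd enc a s' z)
  = bsc a (pat z) * tterm (joint_adv enc (Tp (pat z)) s z)
       (\big[Rplus/R0]_(s' : M) joint_adv enc (Tp (pat z)) s' z).
  move=> s z.
  under eq_bigr => s' _ do rewrite joint_rnd_fact.
  rewrite joint_rnd_fact -big_distrr /= tterm_scale //.
  exact: bsc_gt0.
under eq_bigr => s _ do (under eq_bigr => z _ do rewrite step1).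
under eq_bigr => s _ do rewrite (partition_big (@pat n) xpredT) //=.
rewrite exchange_big /=; apply: eq_bigr => e _.
rewrite condH_tterm big_distrr /=; apply: eq_bigr => s _.
rewrite big_distrr /=.
rewrite [in RHS](bigID (fun z => pat z == e)) /=.
rewrite [X in _ = _ + X]big1; last first.
  move=> z hz; rewrite joint_adv_off //.
  by rewrite /tterm; case: Rlt_dec => /= h; [lra | ring].
rewrite Rplus_0_r; apply: eq_bigr => z /eqP ->; by [].
Qed.


Lemma sum_const_R (M : finType) (c : R) : \big[Rplus/R0]_(s : M) c = INR #|M| * c.
Proof.
rewrite big_const; elim: #|M| => [|k IH]; first by rewrite /=; ring.
rewrite S_INR iterS IH; ring.
Qed.

Lemma sum_u_enc n (M : finType) (enc : M -> word n -> R) (K : R) :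
  (0 < #|M|)%nat -> (forall s, \big[Rplus/R0]_(x : word n) enc s x = 1) ->
  \big[Rplus/R0]_(s : M) (uniformP M * \big[Rplus/R0]_(x : word n) (enc s x * K)) = K.
Proof.
move=> hM hs.
under eq_bigr => s _ do rewrite -big_distrl /= hs Rmult_1_l.
rewrite sum_const_R /uniformP; field.
apply: not_0_INR; lia.
Qed.

Lemma joint_adv_ge0 n (M : finType) (enc : M -> word n -> R) T s v :
  (forall s x, 0 <= enc s x) -> 0 <= joint_adv enc T s v.
Proof.
move=> H; rewrite /joint_adv; apply: sumR_ge0 => x _.
have hu := uniform_ge0 M.
have := H s x; case: eqP => _; nra.
Qed.

Lemma err_ind_01 (M : finType) (s t : M) : 0 <= err_ind s t <= 1.
Proof. rewrite /err_ind; case: eqP => _; lra. Qed.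

Theorem theorem3p2 :
  forall rho_r rho_w : R,
  0 < rho_r < 1 -> 0 < rho_w < / 2 ->
  exists xi0 : R, 0 < xi0 /\
  forall xi : R, 0 < xi < xi0 ->
  exists (c : R) (N0 : nat), 0 < c /\
  forall (n : nat), (N0 <= n)%nat ->
  forall (M : finType) (enc : M -> word n -> R) (dec : word n -> M)
         (delta Delta : R),
    (0 < #|M|)%nat ->
    valid_enc enc ->
    nn_decoder enc dec ->
    (forall (S : {set 'I_n}) (adv : view n -> word n -> R),
        #|S| = nfloor (rho_r * INR n) -> valid_adv rho_w adv ->
        adv_err enc dec S adv <= delta) ->
    (forall S : {set 'I_n}, #|S| = nfloor (rho_r * INR n) ->
        Delta <= condH (joint_adv enc S)) ->
    (exists S : {set 'I_n}, #|S| = nfloor (rho_r * INR n) /\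
        condH (joint_adv enc S) = Delta) ->
    rnd_err enc dec (rho_w - xi) <= delta + exp (- (c * INR n)) /\
    condH (joint_rnd enc (rho_r - xi)) / INR n >=
      (Delta / INR n) * (1 - exp (- (c * INR n))).
Proof.
move=> rho_r rho_w hr hw.
exists (Rmin rho_r rho_w); split; first by apply: Rmin_glb_lt; lra.
move=> xi [hxi hxi0].
have hxr : xi < rho_r by have := Rmin_l rho_r rho_w; lra.
have hxw : xi < rho_w by have := Rmin_r rho_r rho_w; lra.
exists (cst xi), 1%nat; split; first exact: cst_pos.
move=> n hn M enc dec delta Delta hM [hencpos hencsum] _ hadv hDelta [S0 [hS0 hS0D]].
have hnpos : 0 < INR n by apply: lt_0_INR; lia.
set E := exp (- (cst xi * INR n)).
have hE : 0 < E by apply: exp_pos.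
split.
-
  set b := rho_w - xi.
  have hb : 0 < b < 1 by rewrite /b; lra.
  have hbx : b + xi = rho_w by rewrite /b; ring.
  set lightw := fun e : word n => if Rle_dec (INR (wt e)) (rho_w * INR n) then bsc b e else 0.
  set heavyw := fun e : word n =>
     if Rlt_dec ((b + xi) * INR n) (INR (wt e)) then bsc b e else 0.
  set L := \big[Rplus/R0]_(e : word n) lightw e.
  have hL : L <= 1.
    rewrite -(bsc_sum1 n b); apply: sumR_le => e _; rewrite /lightw.
    case: Rle_dec => _ /=; [lra | apply: bsc_ge0; lra].
  set zero : word n := [ffun => false].
  set adv := fun (v : view n) (e : word n) => lightw e + (if e == zero then 1 - L else 0).
  have hlight0 : forall e, 0 <= lightw e.
    move=> e; rewrite /lightw; case: Rle_dec => _ /=; [apply: bsc_ge0; lra | lra].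
  have hvalid : valid_adv rho_w adv.
    split; [|split].
    + move=> v e; rewrite /adv; have := hlight0 e; case: eqP => _; lra.
    + move=> v; rewrite /adv big_split /= -/L (bigD1 zero) //= eqxx big1; first ring.
      by move=> e /negbTE ->.
    + move=> v e; rewrite /adv /lightw; case: Rle_dec => h //= hpos.
      case: eqP hpos => [-> _ | _ ]; last lra.
      have -> : wt zero = 0%nat.
        rewrite /wt; apply/eqP; rewrite cards_eq0; apply/eqP/setP => i.
        by rewrite !inE ffunE.
      rewrite /=; nra.
  have := hadv S0 adv hS0 hvalid.
  have hH : \big[Rplus/R0]_(e : word n) heavyw e <= E.
    by apply: chernoff; lra.
  move=> hae.
  apply: (Rle_trans _ (adv_err enc dec S0 adv + E)); last lra.
  apply: (Rle_trans _ (adv_err enc dec S0 adv + \big[Rplus/R0]_(e : word n) heavyw e)); last lra.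
  rewrite -(@sum_u_enc n M enc (\big[Rplus/R0]_(e : word n) heavyw e) hM hencsum).
  rewrite /rnd_err /adv_err -big_split /=; apply: sumR_le => s _.
  rewrite -Rmult_plus_distr_l; apply: Rmult_le_compat_l; first exact: uniform_ge0.
  rewrite -big_split /=; apply: sumR_le => x _.
  rewrite -Rmult_plus_distr_l; apply: Rmult_le_compat_l; first exact: hencpos.
  rewrite -big_split /=; apply: sumR_le => e _.
  have herr := err_ind_01 s (dec (xorw x e)).
  have hz : 0 <= (if e == zero then 1 - L else 0) by case: eqP => _; lra.
  rewrite /adv /heavyw /lightw hbx.
  have hbs := bsc_ge0 n b e ltac:(lra).
  case: Rle_dec => h1; case: Rlt_dec => h2 /=; try lra; nra.
-
  set a := rho_r - xi.
  have ha : 0 < a < 1 by rewrite /a; lra.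
  have hax : a + xi = rho_r by rewrite /a; ring.
  set k := nfloor (rho_r * INR n).
  have [hk1 hk2] := @nfloor_spec (rho_r * INR n) ltac:(nra).
  rewrite -/k in hk1 hk2.
  have hkn : (k <= n)%nat.
    apply/leP; apply: INR_le; rewrite -/k in hk1; nra.
  have hD0 : 0 <= Delta.
    rewrite -hS0D; apply: condH_ge0 => s v; exact: joint_adv_ge0.
  set heavyw := fun e : word n =>
     if Rlt_dec ((a + xi) * INR n) (INR (wt e)) then bsc a e else 0.
  have hH : \big[Rplus/R0]_(e : word n) heavyw e <= E.
    by apply: chernoff; lra.
  have hmain : Delta * (1 - E) <= condH (joint_rnd enc a).
    rewrite decomp //.
    apply: (Rle_trans _ (Delta * (1 - \big[Rplus/R0]_(e : word n) heavyw e))).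
      apply: Rmult_le_compat_l => //; lra.
    rewrite -{1}(bsc_sum1 n a) Rmult_minus_distr_l !big_distrr /=.
    suff : \big[Rplus/R0]_(e : {ffun 'I_n -> bool}) (Delta * bsc a e) <=
      \big[Rplus/R0]_(e : {ffun 'I_n -> bool}) (bsc a e * condH (joint_adv enc (Tp e)) + Delta * heavyw e).
      rewrite big_split /= /word; lra.
    apply: sumR_le => e _.
    have hbs := bsc_ge0 n a e ltac:(lra).
    have hC0 : 0 <= condH (joint_adv enc (Tp e)).
      apply: condH_ge0 => s v; exact: joint_adv_ge0.
    case: (leqP (wt e) k) => hwe.
    + have hwe' : (#|Tp e| <= k)%nat by [].
      have [T' [sub card]] := superset hwe' hkn.
      have h1 := condH_mono hencpos sub.
      have h2 := hDelta T' card.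
      have hh0 : 0 <= heavyw e.
        rewrite /heavyw; case: Rlt_dec => _ /=; lra.
      have : bsc a e * Delta <= bsc a e * condH (joint_adv enc (Tp e)).
        apply: Rmult_le_compat_l; lra.
      have : 0 <= Delta * heavyw e by apply: Rmult_le_pos.
      lra.
    + have hI : INR k + 1 <= INR (wt e).
        rewrite -S_INR; apply: le_INR; apply/leP; exact: hwe.
      rewrite /heavyw hax; case: Rlt_dec => h /=; last lra.
      have : 0 <= bsc a e * condH (joint_adv enc (Tp e)) by apply: Rmult_le_pos.
      lra.
  rewrite /Rge /Rdiv.
  have hin := Rinv_0_lt_compat _ hnpos.
  have -> : Delta * / INR n * (1 - E) = Delta * (1 - E) * / INR n by ring.
  apply: Rle_ge; apply: Rmult_le_compat_r; lra.
Qed.
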